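(* Let $\zeta:\mathbb{R}\to\mathbb{R}$ be continuous and assume either (i) $\zeta$ is not a polynomial, or (ii) $\zeta$ is not affine and there exists $t\in\mathbb{R}$ at which $\zeta$ is continuously differentiable with $\zeta'(t)\neq 0$. Let $N, D$ be positive integers with $N\ge 2$, let $\mathcal{G}$ be the complete graph on $N$ nodes, let $\mathbf{W}\in\mathbb{R}^{D\times D}$, let $\tilde{\mathbf{A}} = \big(\mathbb{1}_{i\sim j \vee i=j}/\sqrt{\deg(v_i)\deg(v_j)}\big)_{i,j=1}^N$ and $\mathcal{L}^{\mathrm{conv}}_{\mathcal{G},\mathbf{W}}(\mathbf{X}) = \tilde{\mathbf{A}}\mathbf{X}\mathbf{W}$. Then the class of maps $f:\mathbb{R}^{N\times D}\to\mathbb{R}$ of the form $f = \mathrm{MLP}\circ\mathcal{L}^{\mathrm{conv}}_{\mathcal{G},\mathbf{W}}$, where $\mathrm{MLP}:\mathbb{R}^{N\times D}\to\mathbb{R}$ ranges over multilayer perceptrons with activation function $\zeta$, is not dense in $\mathcal{C}(\mathbb{R}^{N\times D},\mathbb{R})$ for the topology of uniform convergence on compact sets.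
   Context: $i\sim j$ means $v_i$ and $v_j$ are adjacent; degrees count the self-loop, so that for the complete graph every entry of $\tilde{\mathbf{A}}$ equals $1/N$. MLPs take the matrix input (viewed as a vector in $\mathbb{R}^{ND}$) to a real number. *)

(* Defs.v *)
From HB Require Import structures.
From mathcomp Require Import all_boot all_order all_algebra.
From mathcomp Require Import all_classical all_reals all_analysis.
Set Implicit Arguments. Unset Strict Implicit. Unset Printing Implicit Defensive.
Import Order.TTheory GRing.Theory Num.Theory.
Import numFieldNormedType.Exports.
Local Open Scope ring_scope.

Definition complete_adj (N : nat) (i j : 'I_N) : bool := i != j.

Definition deg_sl (N : nat) (adj : 'I_N -> 'I_N -> bool) (i : 'I_N) : nat :=
  #|[set j : 'I_N | adj i j || (i == j)]|.

Definition Atilde (R : rcfType) (N : nat) (adj : 'I_N -> 'I_N -> bool) : 'M[R]_N :=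
  \matrix_(i, j) ((adj i j || (i == j))%:R
                  / Num.sqrt ((deg_sl adj i)%:R * (deg_sl adj j)%:R)).

Definition conv_layer (R : rcfType) (N D : nat) (adj : 'I_N -> 'I_N -> bool)
  (W : 'M[R]_D) (X : 'M[R]_(N, D)) : 'M[R]_(N, D) :=
  Atilde R adj *m X *m W.

(* Multilayer perceptrons with input width n and scalar output:
   a (possibly empty) list of hidden affine layers, each followed by the
   componentwise activation, then a final affine map to R. *)
Inductive mlp (R : Type) : nat -> Type :=
| mlp_out (n : nat) (a : 'cV[R]_n) (c : R) : mlp R n
| mlp_hidden (n m : nat) (A : 'M[R]_(n, m)) (b : 'rV[R]_m) (rest : mlp R m) : mlp R n.

Fixpoint mlp_eval (R : nzRingType) (zeta : R -> R) (n : nat) (net : mlp R n)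
  : 'rV[R]_n -> R :=
  match net in mlp _ n return 'rV[R]_n -> R with
  | mlp_out n a c => fun x => (x *m a) ord0 ord0 + c
  | mlp_hidden n m A b rest => fun x => mlp_eval zeta rest (map_mx zeta (x *m A + b))
  end.

Definition mlp_fun (R : nzRingType) (zeta : R -> R) (N D : nat)
  (net : mlp R (N * D)) (X : 'M[R]_(N, D)) : R :=
  mlp_eval zeta net (mxvec X).

Definition is_polynomial_fun (R : nzRingType) (f : R -> R) : Prop :=
  exists p : {poly R}, forall x, f x = p.[x].

Definition is_affine_fun (R : nzRingType) (f : R -> R) : Prop :=
  exists a b : R, forall x, f x = a * x + b.

Definition C1_at (R : realType) (f : R -> R) (t : R) : Prop :=
  (\forall x \near t, derivable f x 1) /\ {for t, continuous (derive1 f)}.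

(* Main.v *)
Require Import Defs.
From HB Require Import structures.
From mathcomp Require Import all_boot all_order all_algebra.
From mathcomp Require Import all_classical all_reals all_analysis.
From mathcomp Require Import lra.
Import Order.TTheory GRing.Theory Num.Theory.
Import numFieldNormedType.Exports.
Local Open Scope classical_set_scope.
Local Open Scope ring_scope.

Theorem lemma2 (R : realType) (zeta : R -> R) (N D : nat) (W : 'M[R]_D) :
  continuous zeta ->
  (~ is_polynomial_fun zeta \/
   (~ is_affine_fun zeta /\ exists t : R, C1_at zeta t /\ derive1 zeta t != 0)) ->
  (2 <= N)%N -> (0 < D)%N ->
  (* the class { MLP o L^conv_{G,W} } is not dense in C(R^{N x D}, R) for the
     compact-open topology: some continuous g, compact K and eps > 0 such that
     every member of the class is eps-far from g somewhere on K *)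
  exists g : 'M[R]_(N, D) -> R, continuous g /\
  exists K : set 'M[R]_(N, D), compact K /\
  exists eps : R, 0 < eps /\
  forall net : mlp R (N * D),
  exists X : 'M[R]_(N, D), K X /\
    eps <= `| mlp_fun zeta net (conv_layer (@complete_adj N) W X) - g X |.
Proof.
move=> _ _ HN HD.
have H1N : (1 < N)%N by [].
have H0N : (0 < N)%N by apply: ltn_trans H1N.
pose i0 : 'I_N := Ordinal H0N.
pose i1 : 'I_N := Ordinal H1N.
pose k0 : 'I_D := Ordinal HD.
pose X0 : 'M[R]_(N, D) := delta_mx i0 k0.
pose X1 : 'M[R]_(N, D) := delta_mx i1 k0.
have Hdeg : forall i, deg_sl (@complete_adj N) i = N.
  move=> i; rewrite /deg_sl /complete_adj.
  by rewrite -[RHS](card_ord N); apply: eq_card => j; rewrite !inE orNb.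
have HA : forall i j j', Atilde R (@complete_adj N) i j = Atilde R (@complete_adj N) i j'.
  by move=> i j j'; rewrite !mxE /complete_adj !orNb !Hdeg.
have Hd : forall (j0 : 'I_N) i k, (Atilde R (@complete_adj N) *m delta_mx j0 k0) i k
    = Atilde R (@complete_adj N) i j0 * (k0 == k)%:R.
  move=> j0 i k; rewrite mxE (bigD1 j0) //= big1 ?addr0.
    by rewrite [delta_mx _ _ _ _]mxE eqxx eq_sym.
  by move=> j Hj; rewrite [delta_mx _ _ _ _]mxE (negbTE Hj) /= mulr0.
have HC : conv_layer (@complete_adj N) W X0 = conv_layer (@complete_adj N) W X1.
  rewrite /conv_layer; congr (_ *m _).
  by apply/matrixP => i k; rewrite !Hd (HA i i1 i0).
exists (fun X : 'M[R]_(N, D) => X i0 k0); split.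
  exact: coord_continuous.
exists ([set X0] `|` [set X1]); split.
  by apply: compactU; apply: compact_set1.
exists (1/2); split; first lra.
move=> net.
set v := mlp_fun zeta net (conv_layer (@complete_adj N) W X1).
have Hg0 : X0 i0 k0 = 1 by rewrite mxE !eqxx.
have Hg1 : X1 i0 k0 = 0 by rewrite mxE.
have [Hle|Hlt] := leP (1/2) `|v - 1|.
  exists X0; split; first by left.
  by rewrite HC Hg0.
exists X1; split; first by right.
rewrite Hg1 subr0.
have : `|(1 - v) + v| <= `|1 - v| + `|v| := ler_normD _ _.
rewrite subrK normr1 distrC => H.
lra.
Qed.
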